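(* There is a constant $C > 0$ such that for every real $x \ge 2$, $$\sum_{\substack{2 \le n \le x \\ P(n)^2 \le n}} f(n) \le C\, x^{3/2} \log x.$$
   Context: For a positive integer $n$, $f(n)$ denotes the smallest positive integer $m$ such that $n$ divides $m!$. For an integer $n \ge 2$, $P(n)$ denotes the largest prime dividing $n$. $\log$ is the natural logarithm. *)

(* Defs.v *)
From Stdlib Require Import Reals.
From mathcomp Require Import all_boot.

Set Implicit Arguments.
Unset Strict Implicit.
Unset Printing Implicit Defensive.

(* f(n) = smallest positive m with n %| m`! (Kempner function), for n >= 1.
   The disjunct (n == 0) only makes the definition total; f(0) = 1 is a
   junk value never used (the sum ranges over n >= 2). *)
Lemma kempner_ex (n : nat) : exists m, ((0 < m) && ((n %| m`!) || (n == 0)))%N.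
Proof.
case: n => [|n]; first by exists 1%N.
exists n.+1; apply/andP; split => //; apply/orP; left; apply: dvdn_fact; by rewrite ltn0Sn leqnn.
Qed.

Definition kempner (n : nat) : nat := ex_minn (kempner_ex n).

Definition P (n : nat) : nat := max_pdiv n.

(* The finite sum  sum_{2 <= n <= x, P(n)^2 <= n} f(n), for real x
   (naturals n with INR n <= x; all such n are < up x). *)
Definition sumF (x : R) : nat :=
  (\sum_(2 <= n < Z.to_nat (up x) | (P n ^ 2 <= n) && (if Rle_dec (INR n) x then true else false))
     kempner n)%N.

(* Main.v *)
Require Import Defs.
From Stdlib Require Import Reals Lra ZArith.
From mathcomp Require Import all_boot.
Set Implicit Arguments.
Unset Strict Implicit.

Lemma key n : 1 < n -> n %| (P n * trunc_log 2 n)`!.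
Proof.
move=> n1; set t := trunc_log 2 n; set m := P n * t.
have n0 : 0 < n by apply: ltnW.
have t1 : 0 < t by rewrite /t trunc_log_gt0.
have Pp : prime (P n) by apply: max_pdiv_prime.
have m0 : 0 < m by rewrite muln_gt0 t1 prime_gt0.
apply/gcdn_idPl; apply: eqn_from_log; rewrite ?gcdn_gt0 ?n0 // => p.
rewrite logn_gcd ?fact_gt0 //; apply/minn_idPl.
case: (posnP (logn p n)) => [->//|]; rewrite logn_gt0 => pn.
have pp : prime p by move: pn; rewrite mem_primes => /and3P[].
have pP : p <= P n by apply: max_pdiv_max.
have lt : logn p n <= t.
  apply: trunc_log_max => //; apply: leq_trans (dvdn_leq n0 (pfactor_dvdnn p n)).
  by rewrite leq_exp2r ?prime_gt1 // logn_gt0.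
rewrite logn_fact // big_ltn ?ltnS // expn1; apply: leq_trans (leq_addr _ _).
apply: leq_trans lt _; rewrite leq_divRL ?prime_gt0 // mulnC /m.
by rewrite leq_mul2r pP orbT.
Qed.

Lemma kb n : 1 < n -> kempner n <= P n * trunc_log 2 n.
Proof.
move=> n1; rewrite /kempner; case: ex_minnP => k _ H; apply: H.
rewrite key // orTb andbT muln_gt0 prime_gt0 ?max_pdiv_prime //=.
by rewrite trunc_log_gt0.
Qed.

Open Scope R_scope.

Lemma ln_le a b : 0 < a -> a <= b -> ln a <= ln b.
Proof. move=> a0 [h|->]; [left; exact: ln_increasing | right; done]. Qed.

Lemma INR_exp (m k : nat) : INR (expn m k) = pow (INR m) k.
Proof. elim: k => [|k IH] //=; by rewrite expnS mult_INR IH. Qed.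

Lemma term_bound x n : 2 <= x -> (1 < n)%N -> (P n ^ 2 <= n)%N -> INR n <= x ->
  INR (kempner n) <= sqrt x * (ln x / ln 2).
Proof.
move=> x2 n1 Pn nx.
set t := trunc_log 2 n.
have ln2 : 0 < ln 2 by have := ln_lt_2; lra.
have H1 : INR (kempner n) <= INR (P n) * INR t by rewrite -mult_INR; apply: le_INR; apply/leP; apply: kb.
have H2 : INR (P n) <= sqrt x.
  rewrite -(sqrt_pow2 (INR (P n))); last by apply: pos_INR.
  apply: sqrt_le_1_alt; rewrite -INR_exp; apply: Rle_trans nx; apply: le_INR; exact/leP.
have H3 : INR t <= ln x / ln 2.
  have : INR t * ln 2 <= ln x.
    rewrite -ln_pow; last lra.
    apply: ln_le; first by apply: pow_lt; lra.
    apply: Rle_trans nx; have -> : 2 = INR 2 by [].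
    rewrite -INR_exp; apply: le_INR; apply/leP; apply: trunc_logP => //; exact: ltnW.
  move=> h; apply Rmult_le_reg_r with (ln 2) => //; unfold Rdiv; rewrite Rmult_assoc Rinv_l; lra.
apply: Rle_trans H1 _; apply: Rmult_le_compat => //; apply: pos_INR.
Qed.

Lemma sum_bound (s : seq nat) (c : pred nat) (F : nat -> nat) B :
  0 <= B -> (forall i, i \in s -> c i -> INR (F i) <= B) ->
  INR (\sum_(i <- s | c i) F i)%N <= INR (size s) * B.
Proof.
move=> B0; elim: s => [|a s IH] H; first by rewrite big_nil /=; lra.
rewrite big_cons [size _]/= S_INR.
have IH' := IH (fun i hi => H i (mem_behead (s:=a::s) hi)).
case: ifP => ca.
  rewrite plus_INR; have := H a (mem_head _ _) ca; nra.
nra.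
Qed.

Theorem mainTheorem5 :
  exists C : R, Rlt 0 C /\
    forall x : R, Rle 2 x ->
      Rle (INR (sumF x)) (Rmult (Rmult C (Rpower x (Rdiv 3 2))) (ln x)).
Proof.
exists 2; split; first lra.
move=> x x2.
have ln2 : / 2 < ln 2 by apply: ln_lt_2.
have lnx : 0 <= ln x by rewrite -ln_1; apply: ln_le; lra.
have sx : 0 <= sqrt x by apply: sqrt_pos.
have B0 : 0 <= sqrt x * (ln x / ln 2).
  apply: Rmult_le_pos => //; apply: Rmult_le_pos => //; left; apply: Rinv_0_lt_compat; lra.
rewrite /sumF.
set U := Z.to_nat (up x).
apply: Rle_trans.
  apply: (sum_bound (B := sqrt x * (ln x / ln 2))) => // i.
  rewrite mem_index_iota => /andP[i2 _] /andP[Pi].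
  case: Rle_dec => // ix _; apply: term_bound => //.
rewrite size_iota.
have [ux1 ux2] := archimed x.
have U3 : INR U = IZR (up x).
  rewrite INR_IZR_INZ /U Z2Nat.id //; apply: le_IZR; lra.
have HU : INR (U - 2)%N <= x.
  case: (leqP 2 U) => h.
    have := f_equal INR (subnK h); rewrite plus_INR => e.
    have : INR 2 = 2 by []. lra.
  have -> : (U - 2)%N = 0%N by apply/eqP; rewrite subn_eq0 ltnW.
  simpl; lra.
have -> : Rpower x (3 / 2) = x * sqrt x.
  replace (3 / 2) with (1 + / 2) by field.
  rewrite Rpower_plus Rpower_1 ?Rpower_sqrt //; lra.
apply: Rle_trans (Rmult_le_compat_r _ _ _ B0 HU) _.
have iv : / ln 2 < 2.
  have h : / ln 2 * ln 2 = 1 by apply: Rinv_l; lra.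
  have : 0 < / ln 2 by apply: Rinv_0_lt_compat; lra.
  nra.
have : 0 <= x * sqrt x * ln x by apply: Rmult_le_pos => //; apply: Rmult_le_pos => //; lra.
unfold Rdiv; nra.
Qed.
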